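(* Let $\Pi$ and $\Pi'$ be $n$-dimensional linear spaces, both satisfying the exchange axiom and the axiom (P2), let $k\ge 1$ with $n\ge 2k+1$, and let $f$ be an injection of $\mathcal{G}_k(\Pi)$ to $\mathcal{G}_k(\Pi')$ sending base subsets to base subsets. For each $(k-1)$-dimensional subspace $S$ of $\Pi$ let $f_{k-1}(S)$ be the unique subspace $S'$ of $\Pi'$ of dimension $k-1$ or $k+1$ with $f(\mathcal{G}_k(S))\subset\mathcal{G}_k(S')$; then $f_{k-1}$ maps $\mathcal{G}_{k-1}(\Pi)$ entirely into $\mathcal{G}_{k-1}(\Pi')$ or entirely into $\mathcal{G}_{k+1}(\Pi')$. The mapping $f_{k-1}$ sends every base subset of $\mathcal{G}_{k-1}(\Pi)$ to a base subset (of $\mathcal{G}_{k-1}(\Pi')$ or of $\mathcal{G}_{k+1}(\Pi')$, respectively).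
   Context: A linear space $\Pi=(P,\mathcal{L})$ is a set $P$ of points with a family $\mathcal{L}$ of proper subsets (lines) such that each line has at least two points and any two distinct points $p,q$ lie on exactly one line $pq$. A subspace is a set $S\subset P$ with $pq\subset S$ for all distinct $p,q\in S$; $\overline{X}$ is the smallest subspace containing $X$. A set $X$ is independent if $\overline{X}$ is not spanned by a proper subset of $X$; a base of $\Pi$ is an independent set spanning $P$. A subspace is $m$-dimensional if $m+1$ is the smallest number of points spanning it. Exchange axiom: for every $X\subset P$ and $p_1,p_2\in P\setminus\overline{X}$, $p_2\in\overline{X\cup\{p_1\}}$ implies $p_1\in\overline{X\cup\{p_2\}}$. Axiom (P2): every line has at least three points. $\mathcal{G}_k(\Pi)$ is the set of $k$-dimensional subspaces; for a subspace $U$, $\mathcal{G}_k(U)$ is the set of $k$-dimensional subspaces incident to $U$ (contained in $U$ or containing $U$). The base subset of $\mathcal{G}_m(\Pi)$ associated with a base $B$ is the set of all $m$-dimensional subspaces spanned by points of $B$. *)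

(* Defs.v *)
From Stdlib Require Import List Arith.

Section LinearSpaces.
Variable P : Type.
Variable L : (P -> Prop) -> Prop.

Definition sub (A B : P -> Prop) : Prop := forall x, A x -> B x.
Definition seteq (A B : P -> Prop) : Prop := forall x, A x <-> B x.
Definition full : P -> Prop := fun _ => True.

Definition linear_space : Prop :=
  (forall l, L l -> exists x, ~ l x) /\
  (forall l, L l -> exists p q, p <> q /\ l p /\ l q) /\
  (forall p q, p <> q ->
     exists l, L l /\ l p /\ l q /\
       forall l', L l' -> l' p -> l' q -> seteq l' l).

Definition subspace (S : P -> Prop) : Prop :=
  forall p q l, S p -> S q -> p <> q -> L l -> l p -> l q -> sub l S.

Definition span (X : P -> Prop) : P -> Prop :=
  fun x => forall S, subspace S -> sub X S -> S x.

Definition span_list (l : list P) : P -> Prop := span (fun x => In x l).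

Definition dim (S : P -> Prop) (m : nat) : Prop :=
  subspace S /\
  (exists l, length l = m + 1 /\ seteq (span_list l) S) /\
  (forall l, length l < m + 1 -> ~ seteq (span_list l) S).

Definition independent (X : P -> Prop) : Prop :=
  forall Y, sub Y X -> ~ sub X Y -> ~ seteq (span Y) (span X).

Definition base (B : P -> Prop) : Prop :=
  independent B /\ seteq (span B) full.

Definition exchange_axiom : Prop :=
  forall (X : P -> Prop) p1 p2, ~ span X p1 -> ~ span X p2 ->
    span (fun x => X x \/ x = p1) p2 -> span (fun x => X x \/ x = p2) p1.

Definition axiom_P2 : Prop :=
  forall l, L l -> exists a b c, l a /\ l b /\ l c /\ a <> b /\ a <> c /\ b <> c.

Definition incident (U S : P -> Prop) : Prop := sub S U \/ sub U S.

Definition Gk_of (k : nat) (U S : P -> Prop) : Prop := dim S k /\ incident U S.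

Definition base_subset (B : P -> Prop) (m : nat) (S : P -> Prop) : Prop :=
  dim S m /\ exists X, sub X B /\ seteq (span X) S.

End LinearSpaces.

Arguments full {P}.
Arguments sub {P}.
Arguments seteq {P}.
Arguments linear_space {P}.
Arguments subspace {P}.
Arguments span {P}.
Arguments span_list {P}.
Arguments dim {P}.
Arguments independent {P}.
Arguments base {P}.
Arguments exchange_axiom {P}.
Arguments axiom_P2 {P}.
Arguments incident {P}.
Arguments Gk_of {P}.
Arguments base_subset {P}.

Definition maps_base_subsets {P P' : Type} (L : (P -> Prop) -> Prop)
  (L' : (P' -> Prop) -> Prop) (m m' : nat)
  (g : (P -> Prop) -> (P' -> Prop)) : Prop :=
  forall B, base L B -> exists B', base L' B' /\
    forall T, (exists S, base_subset L B m S /\ g S = T) <-> base_subset L' B' m' T.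

Definition fk1_prop {P P' : Type} (L : (P -> Prop) -> Prop)
  (L' : (P' -> Prop) -> Prop) (k : nat) (f : (P -> Prop) -> (P' -> Prop))
  (S : P -> Prop) (S' : P' -> Prop) : Prop :=
  (dim L' S' (k - 1) \/ dim L' S' (k + 1)) /\
  forall T, Gk_of L k S T -> Gk_of L' k S' (f T).

(* Main.v *)
Require Import Defs.
From Stdlib Require Import List Arith.
From Stdlib Require Import Lia Classical FunctionalExtensionality PropExtensionality.
Import ListNotations.

Lemma sext {T} (A B : T -> Prop) : (forall x, A x <-> B x) -> A = B.
Proof. intro H; apply functional_extensionality; intro x; apply propositional_extensionality; auto. Qed.

Definition card {T} (X : T -> Prop) (m : nat) : Prop :=
  exists l, NoDup l /\ length l = m /\ forall x, In x l <-> X x.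

Definition setU1 {T} (X : T -> Prop) a : T -> Prop := fun x => X x \/ x = a.
Definition setD1 {T} (X : T -> Prop) a : T -> Prop := fun x => X x /\ x <> a.
Definition emp {T} : T -> Prop := fun _ => False.

Lemma card_emp {T} : card (@emp T) 0.
Proof. exists []; split; [constructor|split; [reflexivity|intro x; simpl; split; intros []]]. Qed.

Lemma card0 {T} (X : T -> Prop) x : card X 0 -> ~ X x.
Proof. intros [l [_ [Hl H]]] Hx. destruct l; [|discriminate]. apply H in Hx. destruct Hx. Qed.

Lemma card_uniq {T} (X : T -> Prop) a b : card X a -> card X b -> a = b.
Proof.
  intros [l [Hn [Hl H]]] [l' [Hn' [Hl' H']]].
  assert (length l <= length l') by (apply NoDup_incl_length; auto; intros x Hx; apply H', H, Hx).
  assert (length l' <= length l) by (apply NoDup_incl_length; auto; intros x Hx; apply H, H', Hx).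
  lia.
Qed.

Lemma card_add {T} (X : T -> Prop) m a : card X m -> ~ X a -> card (setU1 X a) (S m).
Proof.
  intros [l [Hn [Hl H]]] Ha. exists (a :: l). repeat split.
  - constructor; auto. rewrite H; auto.
  - simpl; lia.
  - intros [->|Hx]; unfold setU1; [right; auto|left; apply H; auto].
  - intros [Hx| ->]; simpl; auto. right; apply H; auto.
Qed.

Lemma card_del {T} (X : T -> Prop) m a : card X m -> X a -> card (setD1 X a) (m - 1) /\ 1 <= m.
Proof.
  intros [l [Hn [Hl H]]] Ha. apply H in Ha. destruct (in_split _ _ Ha) as [l1 [l2 ->]].
  split.
  - exists (l1 ++ l2). repeat split.
    + eapply NoDup_remove_1; eauto.
    + rewrite !length_app in *; simpl in *; lia.
    + apply H. apply in_app_or in H0; apply in_or_app; simpl; tauto.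
    + intros ->. apply (NoDup_remove_2 _ _ _ Hn); auto.
    + intros [Hx Hne]. apply H in Hx. apply in_app_or in Hx; apply in_or_app; simpl in Hx.
      destruct Hx as [?|[?|?]]; auto. congruence.
  - rewrite length_app in Hl; simpl in Hl; lia.
Qed.

Lemma card_ext {T} (X Y : T -> Prop) m : card X m -> (forall x, X x <-> Y x) -> card Y m.
Proof. intros C H. rewrite <- (sext X Y H). auto. Qed.

Lemma card_list {T} (l : list T) (X : T -> Prop) :
  (forall x, X x -> In x l) -> exists a, a <= length l /\ card X a.
Proof.
  revert X; induction l as [|h t IH]; intros X HX.
  - exists 0; split; auto. apply card_ext with emp. apply card_emp.
    intro x; split; [intros []|intro Hx; destruct (HX x Hx)].
  - destruct (IH (setD1 X h)) as [a [Ha Ca]].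
    { intros x [Hx Hne]. destruct (HX x Hx); auto. congruence. }
    destruct (classic (X h)) as [Xh|nXh].
    + exists (S a); split; [simpl; lia|]. apply card_ext with (setU1 (setD1 X h) h).
      * apply card_add; auto. intros [_ ?]; auto.
      * intro x; unfold setU1, setD1; split; [intros [[? ?]| ->]; auto|].
        intro Hx; destruct (classic (x = h)); auto.
    + exists a; split; [simpl; lia|]. apply card_ext with (setD1 X h); auto.
      intro x; unfold setD1; split; [tauto|]. intro Hx; split; auto. intros ->; auto.
Qed.

Lemma card_sub_ex {T} (X Y : T -> Prop) b : (forall x, X x -> Y x) -> card Y b -> exists a, a <= b /\ card X a.
Proof.
  intros HXY [l [Hn [Hl H]]]. destruct (card_list l X) as [a [Ha Ca]].
  - intros x Hx; apply H; auto.
  - exists a; split; auto; lia.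
Qed.

Lemma card_sub_le {T} (X Y : T -> Prop) a b : (forall x, X x -> Y x) -> card X a -> card Y b -> a <= b.
Proof.
  intros HXY [l [Hn [Hl H]]] [l' [Hn' [Hl' H']]]. subst.
  apply NoDup_incl_length; auto. intros x Hx; apply H', HXY, H, Hx.
Qed.

Lemma card_sub_eq {T} (X Y : T -> Prop) a b : (forall x, X x -> Y x) -> card X a -> card Y b -> b <= a ->
  forall x, Y x -> X x.
Proof.
  intros HXY [l [Hn [Hl H]]] [l' [Hn' [Hl' H']]] Hle x Hx. subst.
  apply H. apply (NoDup_length_incl (l' := l') Hn); auto. intros y Hy; apply H', HXY, H, Hy. apply H', Hx.
Qed.

Lemma card_pos {T} (X : T -> Prop) m a : card X m -> X a -> 1 <= m.
Proof. intros C Ha. destruct (card_del X m a C Ha); auto. Qed.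

Lemma card_elem {T} (X : T -> Prop) m : card X (S m) -> exists a, X a.
Proof. intros [l [Hn [Hl H]]]. destruct l; [discriminate|]. exists t; apply H; simpl; auto. Qed.

Lemma card_subset {T} (X : T -> Prop) a b : card X b -> a <= b -> exists Y, (forall x, Y x -> X x) /\ card Y a.
Proof.
  intros C Hab. replace b with (a + (b - a)) in C by lia. revert C. generalize (b - a) as d. intros d C.
  revert X C; induction d as [|d IH]; intros X C.
  - exists X; split; auto. rewrite Nat.add_0_r in C; exact C.
  - replace (a + S d) with (S (a + d)) in C by lia.
    destruct (card_elem _ _ C) as [x Hx]. destruct (card_del _ _ _ C Hx) as [C' _].
    replace (S (a + d) - 1) with (a + d) in C' by lia.
    destruct (IH _ C') as [Y [HY CY]]. exists Y; split; auto. intros y Hy; apply HY; auto.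
Qed.

Lemma Forall2_ex {A B} (R : A -> B -> Prop) (l : list A) :
  (forall x, In x l -> exists y, R x y) -> exists l', Forall2 R l l'.
Proof.
  induction l as [|h t IH]; intro H.
  - exists []; constructor.
  - destruct (H h (or_introl eq_refl)) as [y Hy]. destruct IH as [l' Hl'].
    { intros; apply H; simpl; auto. }
    exists (y :: l'); constructor; auto.
Qed.

Lemma Forall2_in_r {A B} (R : A -> B -> Prop) l l' y : Forall2 R l l' -> In y l' -> exists x, In x l /\ R x y.
Proof.
  induction 1; simpl; [intros []|]. intros [->|Hy]; [exists x; auto|].
  destruct (IHForall2 Hy) as [z [? ?]]; exists z; auto.
Qed.

Lemma rel_card {T U} (X : T -> Prop) (Y : U -> Prop) (R : T -> U -> Prop) a b :
  card X a -> card Y b ->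
  (forall x, X x -> exists y, Y y /\ R x y) ->
  (forall x1 x2 y, X x1 -> X x2 -> R x1 y -> R x2 y -> x1 = x2) ->
  a <= b /\ (a = b -> forall y, Y y -> exists x, X x /\ R x y).
Proof.
  intros [l [Hn [Hl H]]] [l' [Hn' [Hl' H']]] Htot Hinj.
  destruct (Forall2_ex (fun x y => Y y /\ R x y) l) as [m Hm].
  { intros x Hx; apply Htot, H, Hx. }
  assert (Hlen : length m = length l) by (symmetry; eapply Forall2_length; eauto).
  assert (HX : forall x, In x l -> X x) by (intros; apply H; auto).
  assert (Hnd : NoDup m).
  { clear - Hm Hn HX Hinj. induction Hm as [|x y l0 m0 [HY HR] Hm0 IHm]; constructor.
    - intro Hy. destruct (Forall2_in_r _ _ _ _ Hm0 Hy) as [x' [Hx' [_ HR']]].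
      inversion Hn; subst. assert (x = x').
      { apply (Hinj x x' y); auto; apply HX; simpl; auto. }
      subst; contradiction.
    - apply IHm. inversion Hn; auto. intros; apply HX; simpl; auto. }
  assert (Hinc : incl m l').
  { intros y Hy. destruct (Forall2_in_r _ _ _ _ Hm Hy) as [x [_ [HY _]]]. apply H'; auto. }
  split.
  - subst. rewrite <- Hlen. apply NoDup_incl_length; auto.
  - intros Hab y Hy. assert (In y m).
    { apply (NoDup_length_incl (l' := l') Hnd); auto; [lia|apply H'; auto]. }
    destruct (Forall2_in_r _ _ _ _ Hm H0) as [x [Hx [_ HR]]]. exists x; split; [apply H|]; auto.
Qed.

Lemma card_diff {T} (B : T -> Prop) b a : card B b -> forall Y, (forall x, Y x -> B x) -> card Y a ->
  card (fun x => B x /\ ~ Y x) (b - a).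
Proof.
  intros CB. induction a as [|a IH]; intros Y HY CY.
  - rewrite Nat.sub_0_r. apply (card_ext B); auto. intro x; split; [|tauto].
    intro; split; auto. apply (card0 _ _ CY).
  - destruct (card_elem _ _ CY) as [y Hy]. destruct (card_del _ _ _ CY Hy) as [CY' _].
    replace (S a - 1) with a in CY' by lia.
    pose proof (IH _ (fun x h => HY x (proj1 h)) CY') as C1.
    destruct (card_del _ _ y C1) as [C2 _].
    { split; [apply HY; auto|]. intros [_ H]; auto. }
    replace (b - S a) with (b - a - 1) by lia. apply (card_ext _ _ _ C2).
    intro x; unfold setD1; split.
    + intros [[Bx nY] ne]; split; auto.
    + intros [Bx nY]. split; [split; [exact Bx|tauto]|intros ->; auto].
Qed.

Lemma card1_uniq {T} (Z : T -> Prop) a b : card Z 1 -> Z a -> Z b -> a = b.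
Proof.
  intros C Ha Hb. destruct (card_del _ _ _ C Ha) as [C' _]. simpl in C'.
  apply NNPP; intro Hne. apply (card0 (setD1 Z a) b C'). split; auto.
Qed.

Lemma add_one {T} (A Bg : T -> Prop) m : (forall x, A x -> Bg x) -> card A m -> card Bg (S m) ->
  exists e, Bg e /\ ~ A e /\ forall x, Bg x <-> A x \/ x = e.
Proof.
  intros H CA CB. pose proof (card_diff Bg _ _ CB A H CA) as C.
  replace (S m - m) with 1 in C by lia.
  destruct (card_elem _ _ C) as [e [Be nAe]]. exists e; repeat split; auto.
  - intros Bx. destruct (classic (A x)); auto. right. apply (card1_uniq _ _ _ C); split; auto.
  - intros [?| ->]; auto.
Qed.

Import ListNotations.

Section Mat.
Context {P : Type} (L : (P -> Prop) -> Prop).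

Lemma span_sub (X : P -> Prop) x : X x -> span L X x.
Proof. intros Hx S _ HS; apply HS, Hx. Qed.

Lemma span_mono (X Y : P -> Prop) : (forall x, X x -> Y x) -> forall x, span L X x -> span L Y x.
Proof. intros H x Hx S HS HYS. apply Hx; auto. intros y Hy; apply HYS, H, Hy. Qed.

Lemma subspace_span X : subspace L (span L X).
Proof.
  intros p q l Hp Hq Hpq Hl Hlp Hlq x Hx S HS HXS.
  apply (HS p q l); auto; [apply Hp|apply Hq]; auto.
Qed.

Lemma span_min (X S : P -> Prop) : subspace L S -> (forall x, X x -> S x) -> forall x, span L X x -> S x.
Proof. intros HS H x Hx; apply Hx; auto. Qed.

Lemma span_trans (X Y : P -> Prop) : (forall x, X x -> span L Y x) -> forall x, span L X x -> span L Y x.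
Proof. intros H; apply span_min; auto; apply subspace_span. Qed.

Lemma span_emp x : ~ span L emp x.
Proof. intro H. apply (span_min emp emp) in H; auto. intros p q l []. Qed.

Lemma span_list_eq l : span_list L l = span L (fun x => In x l).
Proof. reflexivity. Qed.

Definition indep (X : P -> Prop) := forall x, X x -> ~ span L (setD1 X x) x.

Lemma independent_iff X : independent L X <-> indep X.
Proof.
  split.
  - intros H x Hx Hs. apply (H (setD1 X x)).
    + intros y [? ?]; auto.
    + intro Hsub. destruct (Hsub x Hx); auto.
    + intro y; split; [apply span_mono; intros z [? ?]; auto|].
      apply span_trans. intros z Hz. destruct (classic (z = x)) as [->|Hne]; auto.
      apply span_sub; split; auto.
  - intros H Y HYX HXY Heq. apply HXY. intros x Hx. apply NNPP; intro HY.
    apply (H x Hx). apply (span_mono Y). intros y Hy; split; auto. intros ->; auto.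
    apply Heq. apply span_sub; auto.
Qed.

Lemma indep_sub X Y : (forall x, Y x -> X x) -> indep X -> indep Y.
Proof.
  intros H HX x Hx Hs. apply (HX x (H x Hx)). revert Hs; apply span_mono.
  intros y [? ?]; split; auto.
Qed.

Hypothesis HE : exchange_axiom L.

Lemma indep_add X p : indep X -> ~ span L X p -> indep (setU1 X p).
Proof.
  intros HX Hp x Hx Hs.
  destruct (classic (x = p)) as [->|Hne].
  - apply Hp. revert Hs; apply span_mono. intros y [[?|?] ?]; [auto|congruence].
  - destruct Hx as [Hx|]; [|congruence].
    assert (H1 : ~ span L (setD1 X x) x) by (apply HX; auto).
    assert (H2 : ~ span L (setD1 X x) p).
    { intro H; apply Hp; revert H; apply span_mono; intros y [? ?]; auto. }
    assert (H3 : span L (fun y => setD1 X x y \/ y = p) x).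
    { revert Hs; apply span_mono. intros y [[Hy|Hy] Hyx]; [left; split|right]; auto. }
    pose proof (HE (setD1 X x) p x H2 H1 H3) as H4.
    apply Hp. revert H4; apply span_mono. intros y [[? ?]| ->]; auto.
Qed.

Lemma steinitz_gen b : forall (J : P -> Prop), card J b -> forall C I a, card I a ->
  indep (fun x => C x \/ I x) -> (forall x, C x -> I x -> False) ->
  (forall x, I x -> span L (fun y => C y \/ J y) x) -> a <= b.
Proof.
  induction b as [|b IH]; intros J CJ C I a CI Hind Hdis Hsp.
  - destruct a as [|a]; auto. destruct (card_elem _ _ CI) as [x Hx]. exfalso.
    apply (Hind x (or_intror Hx)). generalize (Hsp x Hx). apply span_mono.
    intros y [Hy|Hy]; [|destruct (card0 _ _ CJ Hy)]. split; [left; auto|].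
    intros ->; eauto.
  - destruct (card_elem _ _ CJ) as [j Hj]. destruct (card_del _ _ _ CJ Hj) as [CJ' _].
    replace (S b - 1) with b in CJ' by lia.
    destruct (classic (forall x, I x -> span L (fun y => C y \/ setD1 J j y) x)) as [Hall|Hnall].
    + pose proof (IH _ CJ' C I a CI Hind Hdis Hall); lia.
    + apply not_all_ex_not in Hnall. destruct Hnall as [x Hx].
      apply imply_to_and in Hx. destruct Hx as [Ix Hx].
      set (X := fun y => C y \/ setD1 J j y).
      assert (HCJ : forall y, (fun y => C y \/ J y) y -> (fun y => X y \/ y = j) y).
      { intros y [Hy|Hy]; [left; left; auto|]. destruct (classic (y = j)); [right; auto|left; right; split; auto]. }
      assert (Hj1 : ~ span L X j).
      { intro Hsj. apply Hx. apply (span_trans (fun y => C y \/ J y)).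
        - intros y Hy. apply HCJ in Hy. destruct Hy as [Hy| ->]; auto. apply span_sub; auto.
        - apply Hsp; auto. }
      assert (Hx2 : span L (fun y => X y \/ y = j) x).
      { generalize (Hsp x Ix). apply span_mono; auto. }
      pose proof (HE X j x Hj1 Hx Hx2) as Hjx.
      destruct (card_del _ _ _ CI Ix) as [CI' Ha].
      assert (a - 1 <= b).
      { apply (IH _ CJ' (setU1 C x) (setD1 I x) (a - 1) CI').
        - revert Hind. apply indep_sub. intros y [[Hy|Hy]|[Hy _]]; auto. subst; auto.
        - intros y [Hy|Hy] [Hy' Hne]; [eauto|congruence].
        - intros y [Iy _]. apply (span_trans (fun y => C y \/ J y)); [|apply Hsp; auto].
          intros z [Hz|Hz]; [apply span_sub; left; left; auto|].
          destruct (classic (z = j)) as [->|Hne].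
          + revert Hjx. apply span_mono. intros w [[Hw|Hw]| ->]; [left; left; auto|right; auto|left; right; auto].
          + apply span_sub. right; split; auto. }
      lia.
Qed.

Lemma steinitz I J a b : indep I -> card I a -> card J b -> (forall x, I x -> span L J x) -> a <= b.
Proof.
  intros Hi CI CJ Hs. apply (steinitz_gen b J CJ emp I a CI).
  - revert Hi; apply indep_sub. intros x [[]|?]; auto.
  - intros x [].
  - intros x Hx. generalize (Hs x Hx). apply span_mono. auto.
Qed.

Lemma card_list_span (I : P -> Prop) c : card I c -> exists l, length l = c /\ span_list L l = span L I.
Proof.
  intros [l [_ [Hl H]]]. exists l; split; auto. unfold span_list. f_equal. apply sext; auto.
Qed.

Lemma dim_iff S m : dim L S m <-> exists I, indep I /\ card I (m + 1) /\ span L I = S.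
Proof.
  split.
  - intros [HS [[l [Hl Heq]] Hmin]].
    destruct (card_list l (fun x => In x l)) as [c [Hc CI]]; auto.
    assert (HsI : span L (fun x => In x l) = S) by (apply sext; auto).
    assert (c = m + 1).
    { destruct (Nat.lt_ge_cases c (m + 1)) as [Hlt|]; [|lia]. exfalso.
      destruct (card_list_span _ _ CI) as [l2 [Hl2 Hs2]]. apply (Hmin l2); [lia|].
      rewrite Hs2, HsI. intro; tauto. }
    subst c. exists (fun x => In x l). repeat split; auto.
    intros x Hx Hs. destruct (card_del _ _ _ CI Hx) as [CI' _].
    destruct (card_list_span _ _ CI') as [l3 [Hl3 Hs3]]. apply (Hmin l3); [lia|].
    rewrite Hs3. rewrite <- HsI. intro y; split; [apply span_mono; intros z [? ?]; auto|].
    apply span_trans. intros z Hz. destruct (classic (z = x)) as [->|Hne]; auto.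
    apply span_sub; split; auto.
  - intros [I [Hi [CI <-]]]. split; [apply subspace_span|]. split.
    + destruct (card_list_span _ _ CI) as [l [Hl Hs]]. exists l; split; auto. rewrite Hs; intro; tauto.
    + intros l Hl Heq. destruct (card_list l (fun x => In x l)) as [c [Hc Cl]]; auto.
      assert (m + 1 <= c); [|lia].
      apply (steinitz I _ _ _ Hi CI Cl). intros x Hx. apply Heq. apply span_sub; auto.
Qed.

Lemma dim_span I m : indep I -> card I (m + 1) -> dim L (span L I) m.
Proof. intros; apply dim_iff; eauto. Qed.

Lemma dim_nonempty S m : dim L S m -> exists x, S x.
Proof.
  intros H; apply dim_iff in H. destruct H as [I [_ [CI <-]]].
  replace (m + 1) with (S m) in CI by lia. destruct (card_elem _ _ CI) as [x Hx].
  exists x; apply span_sub; auto.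
Qed.

Lemma dim_sub_eq S T a b : (forall x, S x -> T x) -> dim L S a -> dim L T b -> b <= a -> S = T /\ a = b.
Proof.
  intros Hsub HS HT Hba. apply dim_iff in HS, HT.
  destruct HS as [I [Hi [CI HI]]]; destruct HT as [J [Hj [CJ HJ]]].
  assert (a + 1 <= b + 1).
  { apply (steinitz I J _ _ Hi CI CJ). intros x Hx. rewrite HJ. apply Hsub. rewrite <- HI. apply span_sub; auto. }
  split; [|lia]. apply sext. intro x; split; auto. intro Tx. apply NNPP; intro nS.
  assert (Hi2 : indep (setU1 I x)) by (apply indep_add; auto; rewrite HI; auto).
  assert (a + 1 + 1 <= b + 1); [|lia].
  apply (steinitz (setU1 I x) J _ _ Hi2).
  - rewrite (Nat.add_1_r (a + 1)). apply card_add; auto. intro Ix. apply nS. rewrite <- HI. apply span_sub; auto.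
  - auto.
  - intros y [Iy| ->]; rewrite HJ; auto. apply Hsub. rewrite <- HI; apply span_sub; auto.
Qed.

Lemma dim_uniq S a b : dim L S a -> dim L S b -> a = b.
Proof.
  intros Ha Hb. destruct (Nat.le_ge_cases a b).
  - symmetry; apply (dim_sub_eq S S b a); auto.
  - apply (dim_sub_eq S S a b); auto.
Qed.

Lemma span_inj_base B X1 X2 : indep B -> (forall x, X1 x -> B x) -> (forall x, X2 x -> B x) ->
  (forall x, span L X1 x -> span L X2 x) -> forall x, X1 x -> X2 x.
Proof.
  intros HB H1 H2 Hs x Hx. apply NNPP; intro nX. apply (HB x (H1 x Hx)).
  apply (span_mono X2). intros y Hy; split; auto. intros ->; auto.
  apply Hs, span_sub, Hx.
Qed.

Lemma exch_out d : forall (Z D : P -> Prop) p, card D d -> span L (fun y => Z y \/ D y) p -> ~ span L Z p ->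
  exists x, D x /\ span L (fun y => Z y \/ (D y /\ y <> x) \/ y = p) x.
Proof.
  induction d as [|d IH]; intros Z D p CD Hs Hn.
  - exfalso; apply Hn; revert Hs; apply span_mono. intros y [?|Hy]; auto. destruct (card0 _ _ CD Hy).
  - destruct (card_elem _ _ CD) as [x Hx]. destruct (card_del _ _ _ CD Hx) as [CD' _].
    replace (S d - 1) with d in CD' by lia.
    destruct (classic (span L (fun y => Z y \/ setD1 D x y) p)) as [Hp|Hp].
    + destruct (IH Z _ p CD' Hp Hn) as [x' [[Dx' _] Hx']]. exists x'; split; auto.
      revert Hx'; apply span_mono. intros y [?|[[[? ?] ?]|?]]; auto.
    + exists x; split; auto.
      assert (Hx1 : ~ span L (fun y => Z y \/ setD1 D x y) x).
      { intro H; apply Hp. revert Hs; apply span_trans. intros y [Hy|Hy]; [apply span_sub; auto|].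
        destruct (classic (y = x)) as [->|Hne]; auto. apply span_sub; right; split; auto. }
      assert (H3 : span L (fun y => (fun y => Z y \/ setD1 D x y) y \/ y = x) p).
      { revert Hs; apply span_mono. intros y [Hy|Hy]; auto. destruct (classic (y = x)); auto.
        left; right; split; auto. }
      pose proof (HE _ x p Hx1 Hp H3) as H4. revert H4; apply span_mono.
      intros y [[?|[? ?]]|?]; auto.
Qed.

Lemma span_inter B X1 X2 c : indep B -> (forall x, X1 x -> B x) -> (forall x, X2 x -> B x) -> card X1 c ->
  forall p, span L X1 p -> span L X2 p -> span L (fun y => X1 y /\ X2 y) p.
Proof.
  intros HB H1 H2 C1 p Hp1 Hp2. apply NNPP; intro Hn.
  destruct (card_sub_ex (fun y => X1 y /\ ~ X2 y) X1 c) as [d [_ CD]]; [tauto|auto|].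
  destruct (exch_out d (fun y => X1 y /\ X2 y) _ p CD) as [x [[X1x nX2x] Hx]]; auto.
  { revert Hp1; apply span_mono. intros y Hy. destruct (classic (X2 y)); auto. }
  apply (HB x (H1 x X1x)). revert Hx. apply span_trans.
  intros y [[Hy Hy']|[[[Hy Hy'] Hne]| ->]].
  - apply span_sub. split; auto. intros ->; auto.
  - apply span_sub. split; auto.
  - revert Hp2. apply span_mono. intros z Hz; split; auto. intros ->; auto.
Qed.

Definition fullP : P -> Prop := fun _ => True.

Lemma base_iff B : base L B <-> indep B /\ span L B = fullP.
Proof.
  unfold base. rewrite independent_iff. split; intros [? H]; split; auto.
  - apply sext; auto.
  - rewrite H; intro; unfold fullP, full; tauto.
Qed.

Variable n : nat.
Hypothesis Hdim : dim L full n.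

Lemma base_card B : base L B -> card B (n + 1).
Proof.
  intros HB. apply base_iff in HB. destruct HB as [Hi Hs].
  pose proof Hdim as Hd. apply dim_iff in Hd. destruct Hd as [J [Hj [CJ HJ]]].
  assert (Hbound : forall X c, (forall x, X x -> B x) -> card X c -> c <= n + 1).
  { intros X c HX CX. apply (steinitz X J _ _ (indep_sub _ _ HX Hi) CX CJ).
    intros x _. rewrite HJ. exact Logic.I. }
  assert (Hfin : forall d, (exists X, (forall x, X x -> B x) /\ card X d) \/ exists c, card B c).
  { induction d as [|d [[X [HX CX]]|?]]; auto.
    - left; exists emp; split; [intros _ []|apply card_emp].
    - destruct (classic (forall y, B y -> X y)) as [Hall|Hn].
      + right; exists d. apply (card_ext X); auto. intro x; split; auto.
      + apply not_all_ex_not in Hn; destruct Hn as [y Hy]; apply imply_to_and in Hy.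
        left; exists (setU1 X y); split; [intros x [?| ->]; [apply HX; auto|tauto]|]. apply card_add; tauto. }
  destruct (Hfin (n + 2)) as [[X [HX CX]]|[c CB]].
  { pose proof (Hbound _ _ HX CX); lia. }
  pose proof (Hbound B c (fun x h => h) CB).
  assert (n + 1 <= c); [|replace (n + 1) with c by lia; auto].
  apply (steinitz J B _ _ Hj CJ CB). intros x _. rewrite Hs. exact Logic.I.
Qed.

Lemma base_exists : exists B, base L B.
Proof.
  pose proof Hdim as Hd. apply dim_iff in Hd. destruct Hd as [J [Hj [CJ HJ]]].
  exists J. apply base_iff; split; auto.
Qed.

Lemma extend_gen (I B : P -> Prop) : indep I -> forall d B0, card B0 d -> (forall x, B0 x -> B x) ->
  exists W, (forall x, W x -> B0 x) /\ (forall x, I x -> W x -> False) /\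
    indep (fun x => I x \/ W x) /\ (forall x, B0 x -> span L (fun x => I x \/ W x) x).
Proof.
  intros HI d. induction d as [|d IH]; intros B0 C0 HB0.
  - exists emp. repeat split.
    + intros _ [].
    + intros _ _ [].
    + revert HI; apply indep_sub. intros x [?|[]]; auto.
    + intros x Hx; destruct (card0 _ _ C0 Hx).
  - destruct (card_elem _ _ C0) as [b Hb]. destruct (card_del _ _ _ C0 Hb) as [C1 _].
    replace (S d - 1) with d in C1 by lia.
    destruct (IH _ C1) as [W [HW [Hd [Hi Hs]]]]; [intros x [? ?]; auto|].
    destruct (classic (span L (fun x => I x \/ W x) b)) as [Hbs|Hbs].
    + exists W. repeat split; auto.
      * intros x Hx; apply HW; auto. 
      * intros x Hx. destruct (classic (x = b)) as [->|Hne]; auto. apply Hs; split; auto.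
    + exists (setU1 W b). repeat split.
      * intros x [Hx| ->]; auto. apply HW; auto.
      * intros x Ix [Wx| ->]; [eauto|]. apply Hbs; apply span_sub; auto.
      * apply (indep_sub (setU1 (fun x => I x \/ W x) b)).
        { intros x [?|[?| ->]]; [left; left|left; right|right]; auto. }
        apply indep_add; auto.
      * intros x Hx. destruct (classic (x = b)) as [->|Hne].
        -- apply span_sub; right; right; auto.
        -- generalize (Hs x (conj Hx Hne)). apply span_mono. intros y [?|?]; [left|right; left]; auto.
Qed.

Lemma extend (I B : P -> Prop) : indep I -> base L B ->
  exists W, (forall x, W x -> B x) /\ (forall x, I x -> W x -> False) /\
    base L (fun x => I x \/ W x).
Proof.
  intros HI HB. pose proof (base_card _ HB) as CB.
  destruct (extend_gen I B HI _ B CB) as [W [HW [Hd [Hi Hs]]]]; auto.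
  exists W. split; [auto|split; [auto|]]. apply base_iff; split; auto.
  apply base_iff in HB. destruct HB as [_ HB]. apply sext. intro x; split; [intros; exact Logic.I|].
  intros _. apply (span_trans B); auto. rewrite HB; exact Logic.I.
Qed.

Lemma bs_iff B m S : base L B -> (base_subset L B m S <-> exists X, (forall x, X x -> B x) /\ card X (m + 1) /\ S = span L X).
Proof.
  intros HB. pose proof (base_card _ HB) as CB. apply base_iff in HB. destruct HB as [Hi _]. split.
  - intros [HS [X [HX Heq]]]. apply sext in Heq. subst S.
    destruct (card_sub_ex X B _ HX CB) as [c [_ CX]].
    destruct c as [|c].
    + destruct (dim_nonempty _ _ HS) as [x Hx]. exfalso. apply (span_emp x).
      revert Hx; apply span_mono. intros y Hy; apply (card0 _ _ CX Hy).
    + replace (S c) with (c + 1) in CX by lia.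
      pose proof (dim_span X c (indep_sub _ _ HX Hi) CX) as Hd.
      rewrite (dim_uniq _ _ _ HS Hd). exists X; auto.
  - intros [X [HX [CX ->]]]. split.
    + apply dim_span; auto. apply (indep_sub _ _ HX Hi).
    + exists X; split; auto. intro; tauto.
Qed.

End Mat.

Lemma in_span_base {P : Type} (L : (P -> Prop) -> Prop) B X x : indep L B -> (forall y, X y -> B y) -> B x -> span L X x -> X x.
Proof.
  intros HB HX Bx Hs. apply NNPP; intro nX. apply (HB x Bx). revert Hs; apply span_mono.
  intros y Hy; split; auto. intros ->; auto.
Qed.


Section Main.
Context {P P' : Type} (L : (P -> Prop) -> Prop) (L' : (P' -> Prop) -> Prop)
  (n k : nat) (f g : (P -> Prop) -> (P' -> Prop)).
Hypothesis HE : exchange_axiom L.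
Hypothesis HE' : exchange_axiom L'.
Hypothesis Hd : dim L full n.
Hypothesis Hd' : dim L' full n.
Hypothesis Hk : 1 <= k.
Hypothesis Hnk : 2 * k + 1 <= n.
Hypothesis Hf : forall S, dim L S k -> dim L' (f S) k.
Hypothesis Hinj : forall S T, dim L S k -> dim L T k -> f S = f T -> S = T.
Hypothesis Hfb : maps_base_subsets L L' k k f.
Hypothesis Hg : forall S, dim L S (k - 1) -> fk1_prop L L' k f S (g S).

Definition sub1 {T} (D X : T -> Prop) := forall x, D x -> X x.
Definition sub2 {T} (D X : T -> Prop) := forall x, X x -> D x.

Section Base.
Variables (B : P -> Prop) (B' : P' -> Prop).
Hypothesis HB : base L B.
Hypothesis HB' : base L' B'.
Hypothesis HBB : forall T, (exists S, base_subset L B k S /\ f S = T) <-> base_subset L' B' k T.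

Lemma CB : card B (n + 1).
Proof. apply (base_card L HE n Hd B HB). Qed.
Lemma CB' : card B' (n + 1).
Proof. apply (base_card L' HE' n Hd' B' HB'). Qed.
Lemma iB : indep L B.
Proof. apply base_iff in HB; tauto. Qed.
Lemma iB' : indep L' B'.
Proof. apply base_iff in HB'; tauto. Qed.

Lemma fX X : (forall x, X x -> B x) -> card X (k + 1) ->
  exists X', (forall x, X' x -> B' x) /\ card X' (k + 1) /\ f (span L X) = span L' X'.
Proof.
  intros HX CX. assert (H : base_subset L' B' k (f (span L X))).
  { apply HBB. exists (span L X); split; auto. apply (bs_iff L HE n Hd); auto. exists X; auto. }
  apply (bs_iff L' HE' n Hd') in H. destruct H as [X' [? [? ?]]]. exists X'; auto. auto.
Qed.

Lemma fsurj X' : (forall x, X' x -> B' x) -> card X' (k + 1) ->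
  exists X, (forall x, X x -> B x) /\ card X (k + 1) /\ f (span L X) = span L' X'.
Proof.
  intros HX CX. assert (H : base_subset L' B' k (span L' X')).
  { apply (bs_iff L' HE' n Hd'); auto. exists X'; auto. }
  apply HBB in H. destruct H as [Sx [HS <-]].
  apply (bs_iff L HE n Hd) in HS; auto. destruct HS as [X [? [? ->]]]; exists X; auto.
Qed.

Lemma sinj X1 X2 : (forall x, X1 x -> B x) -> (forall x, X2 x -> B x) -> span L X1 = span L X2 -> X1 = X2.
Proof.
  intros H1 H2 E. apply sext; intro x; split; apply (span_inj_base L B); auto; try apply iB;
  rewrite E; auto.
Qed.

Lemma sinj' X1 X2 : (forall x, X1 x -> B' x) -> (forall x, X2 x -> B' x) -> span L' X1 = span L' X2 -> X1 = X2.
Proof.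
  intros H1 H2 E. apply sext; intro x; split; apply (span_inj_base L' B'); auto; try apply iB';
  rewrite E; auto.
Qed.

Lemma finj X1 X2 : (forall x, X1 x -> B x) -> card X1 (k + 1) -> (forall x, X2 x -> B x) -> card X2 (k + 1) ->
  f (span L X1) = f (span L X2) -> X1 = X2.
Proof.
  intros H1 C1 H2 C2 E. apply sinj; auto. apply Hinj; auto.
  - apply dim_span; auto. apply (indep_sub L B); auto. apply iB.
  - apply dim_span; auto. apply (indep_sub L B); auto. apply iB.
Qed.

Lemma Yc_facts Y c : (forall x, Y x -> B x) -> card Y k -> B c -> ~ Y c ->
  (forall x, setU1 Y c x -> B x) /\ card (setU1 Y c) (k + 1).
Proof.
  intros HY CY Bc nYc. split.
  - intros x [?| ->]; auto.
  - rewrite Nat.add_1_r. apply card_add; auto.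
Qed.

Lemma inj_c Y c1 c2 : (forall x, Y x -> B x) -> card Y k -> B c1 -> ~ Y c1 -> B c2 -> ~ Y c2 ->
  f (span L (setU1 Y c1)) = f (span L (setU1 Y c2)) -> c1 = c2.
Proof.
  intros HY CY B1 n1 B2 n2 E.
  destruct (Yc_facts Y c1) as [H1 C1]; auto. destruct (Yc_facts Y c2) as [H2 C2]; auto.
  pose proof (finj _ _ H1 C1 H2 C2 E) as E2.
  assert (Hc : setU1 Y c2 c1) by (rewrite <- E2; right; auto).
  destruct Hc; auto; contradiction.
Qed.

Definition good (rel : (P' -> Prop) -> (P' -> Prop) -> Prop) s Y D :=
  (forall x, D x -> B' x) /\ card D s /\ g (span L Y) = span L' D /\
  forall X', (forall x, X' x -> B' x) -> card X' (k + 1) ->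
    (rel D X' <-> exists c, B c /\ ~ Y c /\ f (span L (setU1 Y c)) = span L' X').

Lemma stepA Y : (forall x, Y x -> B x) -> card Y k ->
  (exists D, good sub1 k Y D) \/ (n = 2 * k + 1 /\ exists D, good sub2 (k + 2) Y D).
Proof.
  intros HY CY.
  assert (CYk : card Y ((k - 1) + 1)) by (replace (k - 1 + 1) with k by lia; auto).
  assert (HS : dim L (span L Y) (k - 1)).
  { apply dim_span; auto. apply (indep_sub L B); auto; apply iB. }
  destruct (Hg _ HS) as [Hdg Hinc].
  set (gS := g (span L Y)) in *.
  assert (Hc : forall c, B c -> ~ Y c -> exists X', (forall x, X' x -> B' x) /\ card X' (k + 1) /\
     f (span L (setU1 Y c)) = span L' X' /\ incident gS (span L' X')).
  { intros c Bc nYc. destruct (Yc_facts Y c) as [H1 C1]; auto.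
    destruct (fX _ H1 C1) as [X' [HX' [CX' E]]]. exists X'; repeat split; auto.
    assert (HT : Gk_of L k (span L Y) (span L (setU1 Y c))).
    { split. apply dim_span; auto. apply (indep_sub L B); auto; apply iB.
      right. intros x. apply span_mono. intros y Hy; left; auto. }
    destruct (Hinc _ HT) as [_ Hi]. rewrite E in Hi. exact Hi. }
  assert (HdX : forall X', (forall x, X' x -> B' x) -> card X' (k + 1) -> dim L' (span L' X') k).
  { intros X' HX' CX'. apply dim_span; auto. apply (indep_sub L' B'); auto; apply iB'. }
  pose proof (card_diff B (n + 1) k CB Y HY CY) as CDY.
  pose proof CDY as CD.
  replace (n + 1 - k) with (S (n - k)) in CD by lia.
  destruct (card_elem _ _ CD) as [c1 [Bc1 nY1]].
  destruct (card_del _ _ _ CD (conj Bc1 nY1)) as [CD1 _].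
  replace (S (n - k) - 1) with (S (n - k - 1)) in CD1 by lia.
  destruct (card_elem _ _ CD1) as [c2 [[Bc2 nY2] ne12]].
  destruct (Hc c1 Bc1 nY1) as [X1 [HX1 [CX1 [E1 I1]]]].
  destruct (Hc c2 Bc2 nY2) as [X2 [HX2 [CX2 [E2 I2]]]].
  assert (Hne : exists e, X2 e /\ ~ X1 e).
  { apply NNPP; intro Hn. apply ne12.
    assert (Hsub : forall y, X2 y -> X1 y) by (intros y Hy; apply NNPP; intro; apply Hn; eauto).
    assert (X2 = X1).
    { apply sext; intro x; split; [apply Hsub|].
      apply (card_sub_eq X2 X1 (k + 1) (k + 1)); auto. }
    apply (inj_c Y c2 c1); auto. rewrite E1, E2, H; auto. }
  destruct Hne as [e0 [X2e nX1e]].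
  destruct Hdg as [Hd1|Hd2].
  - left.
    assert (Hin1 : forall X', (forall x, X' x -> B' x) -> card X' (k + 1) -> incident gS (span L' X') ->
       forall x, gS x -> span L' X' x).
    { intros X' HX' CX' [Hi|Hi].
      - exfalso. destruct (dim_sub_eq L' HE' (span L' X') gS k (k - 1) Hi) as [_ ?]; auto; lia.
      - exact Hi. }
    set (D := fun y => X1 y /\ X2 y).
    assert (HgD : forall x, gS x -> span L' D x).
    { intros x Hx. apply (span_inter L' HE' B' X1 X2 (k + 1)); auto.
      all: first [apply iB' | apply (Hin1 X1); auto | apply (Hin1 X2); auto]. }
    destruct (card_sub_ex D X1 (k + 1)) as [e [He CDe]]; [intros y [? ?]; auto|auto|].
    assert (Hek : e <> k + 1).
    { intro; subst e.
      assert (H12 : forall y, X1 y -> X2 y).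
      { intros y Hy. apply (card_sub_eq D X1 (k + 1) (k + 1)) in Hy; auto. destruct Hy; auto.
        intros z [? ?]; auto. }
      apply nX1e. apply (card_sub_eq X1 X2 (k + 1) (k + 1)); auto. }
    destruct e as [|e'].
    { exfalso. destruct (dim_nonempty L' HE' gS (k - 1) Hd1) as [x Hx]. apply (span_emp L' x).
      generalize (HgD x Hx). apply span_mono. intros y Hy. apply (card0 D y CDe Hy). }
    assert (HDB : forall x, D x -> B' x) by (intros y [? ?]; auto).
    assert (HDd : dim L' (span L' D) e').
    { apply dim_span; auto. apply (indep_sub L' B'); auto. apply iB'.
      replace (e' + 1) with (S e') by lia; auto. }
    destruct (dim_sub_eq L' HE' gS (span L' D) (k - 1) e' HgD Hd1 HDd) as [EgD Ee]; [lia|].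
    exists D.
    assert (CDk : card D k) by (replace k with (S e') by lia; auto).
    assert (Htot : forall c, B c -> ~ Y c -> exists z, (B' z /\ ~ D z) /\
       f (span L (setU1 Y c)) = span L' (setU1 D z)).
    { intros c Bc nYc. destruct (Hc c Bc nYc) as [X [HX [CX [E Ii]]]].
      assert (DX : forall x, D x -> X x).
      { apply (span_inj_base L' B'); auto. apply iB'. intros x Hx. apply (Hin1 X HX CX Ii).
        rewrite EgD; auto. }
      rewrite Nat.add_1_r in CX.
      destruct (add_one D X k DX CDk CX) as [z [Xz [nDz Hiff]]].
      exists z; split; [split; auto|]. rewrite E. f_equal. apply sext. intro x; rewrite Hiff; unfold setU1; tauto. }
    pose proof (card_diff B' (n + 1) k CB' D HDB CDk) as CD'.
    destruct (rel_card _ _ (fun c z => f (span L (setU1 Y c)) = span L' (setU1 D z)) _ _ CDY CD') as [_ Hsurj].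
    { intros c [Bc nYc]. destruct (Htot c Bc nYc) as [z [? ?]]; eauto. }
    { intros a b z [Ba na] [Bb nb] Ea Eb. apply (inj_c Y a b); auto. rewrite Ea, Eb; auto. }
    split; [|split; [|split]]; auto.
    intros X' HX' CX'. split.
    + intros DX'. rewrite Nat.add_1_r in CX'. destruct (add_one D X' k DX' CDk CX') as [z [Xz [nDz Hiff]]].
      destruct (Hsurj eq_refl z (conj (HX' z Xz) nDz)) as [c [[Bc nYc] Ec]].
      exists c; repeat split; auto. rewrite Ec. f_equal. apply sext; intro x; rewrite Hiff; unfold setU1; tauto.
    + intros [c [Bc [nYc Ec]]]. destruct (Hc c Bc nYc) as [X [HX [CX [E Ii]]]].
      assert (X = X') by (apply sinj'; auto; rewrite <- E; exact Ec).
      subst X'. unfold sub1. apply (span_inj_base L' B'); auto. apply iB'. intros x Hx. apply (Hin1 X HX CX Ii).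
      rewrite EgD; auto.
  - assert (Hin2 : forall X', (forall x, X' x -> B' x) -> card X' (k + 1) -> incident gS (span L' X') ->
       forall x, span L' X' x -> gS x).
    { intros X' HX' CX' [Hi|Hi]; auto.
      exfalso. destruct (dim_sub_eq L' HE' gS (span L' X') (k + 1) k Hi) as [_ ?]; auto; lia. }
    set (D := setU1 X1 e0).
    assert (HDB : forall x, D x -> B' x) by (intros x [?| ->]; auto).
    assert (nspan : ~ span L' X1 e0).
    { intro H; apply nX1e; apply (in_span_base L' B'); auto; apply iB'. }
    assert (CDk : card D (k + 2)) by (replace (k + 2) with (S (k + 1)) by lia; apply card_add; auto).
    assert (iD : indep L' D).
    { apply indep_add; auto. apply (indep_sub L' B'); auto; apply iB'. }
    assert (HDd : dim L' (span L' D) (k + 1)).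
    { apply dim_span; auto. replace (k + 1 + 1) with (k + 2) by lia; auto. }
    assert (DgS : forall x, span L' D x -> gS x).
    { apply (span_min L' D gS). exact (proj1 Hd2). intros x [Hx| ->].
      - apply (Hin2 X1 HX1 CX1 I1); apply span_sub; auto.
      - apply (Hin2 X2 HX2 CX2 I2); apply span_sub; auto. }
    destruct (dim_sub_eq L' HE' (span L' D) gS (k + 1) (k + 1) DgS HDd Hd2) as [EgD _]; [lia|].
    assert (Htot : forall c, B c -> ~ Y c -> exists z, D z /\
       f (span L (setU1 Y c)) = span L' (setD1 D z)).
    { intros c Bc nYc. destruct (Hc c Bc nYc) as [X [HX [CX [E Ii]]]].
      assert (XD : forall x, X x -> D x).
      { apply (span_inj_base L' B'); auto. apply iB'. intros x Hx. rewrite EgD.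
        apply (Hin2 X HX CX Ii); auto. }
      replace (k + 2) with (S (k + 1)) in CDk by lia.
      destruct (add_one X D (k + 1) XD CX CDk) as [z [Dz [nXz Hiff]]].
      exists z; split; auto. rewrite E. f_equal. apply sext. intro x; unfold setD1; rewrite Hiff.
      split; [intro Hx; split; auto; intros ->; contradiction|tauto]. }
    destruct (rel_card _ _ (fun c z => f (span L (setU1 Y c)) = span L' (setD1 D z)) _ _ CDY CDk) as [Hle Hsurj].
    { intros c [Bc nYc]. destruct (Htot c Bc nYc) as [z [? ?]]; eauto. }
    { intros a b z [Ba na] [Bb nb] Ea Eb. apply (inj_c Y a b); auto. rewrite Ea, Eb; auto. }
    assert (Hn : n = 2 * k + 1) by lia.
    right. split; auto. exists D. split; [|split; [|split]]; auto.
    intros X' HX' CX'. split.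
    + intros X'D. replace (k + 2) with (S (k + 1)) in CDk by lia.
      destruct (add_one X' D (k + 1) X'D CX' CDk) as [z [Dz [nXz Hiff]]].
      destruct (Hsurj ltac:(lia) z Dz) as [c [[Bc nYc] Ec]].
      exists c; repeat split; auto. rewrite Ec. f_equal. apply sext; intro x; unfold setD1; rewrite Hiff.
      split; [tauto|intro Hx; split; auto; intros ->; contradiction].
    + intros [c [Bc [nYc Ec]]]. destruct (Hc c Bc nYc) as [X [HX [CX [E Ii]]]].
      assert (X = X') by (apply sinj'; auto; rewrite <- E; exact Ec).
      subst X'. unfold sub2. apply (span_inj_base L' B'); auto. apply iB'. intros x Hx. rewrite EgD.
      apply (Hin2 X HX CX Ii); auto.
Qed.

Definition typ Y := dim L' (g (span L Y)) (k - 1).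

Lemma good1_typ Y D : good sub1 k Y D -> typ Y.
Proof.
  intros [HD [CD [E _]]]. unfold typ. rewrite E. apply dim_span; auto.
  apply (indep_sub L' B'); auto; apply iB'. replace (k - 1 + 1) with k by lia; auto.
Qed.

Lemma good2_ntyp Y D : good sub2 (k + 2) Y D -> ~ typ Y.
Proof.
  intros [HD [CD [E _]]] Ht. unfold typ in Ht. rewrite E in Ht.
  assert (dim L' (span L' D) (k + 1)).
  { apply dim_span; auto. apply (indep_sub L' B'); auto; apply iB'. replace (k + 1 + 1) with (k + 2) by lia; auto. }
  pose proof (dim_uniq L' HE' _ _ _ Ht H). lia.
Qed.

Lemma typ_good Y : (forall x, Y x -> B x) -> card Y k -> typ Y -> exists D, good sub1 k Y D.
Proof.
  intros HY CY Ht. destruct (stepA Y HY CY) as [?|[_ [D HD]]]; auto.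
  exfalso; apply (good2_ntyp Y D); auto.
Qed.

Lemma ntyp_good Y : (forall x, Y x -> B x) -> card Y k -> ~ typ Y -> n = 2 * k + 1 /\ exists D, good sub2 (k + 2) Y D.
Proof.
  intros HY CY Ht. destruct (stepA Y HY CY) as [[D HD]|?]; auto.
  exfalso; apply Ht; apply (good1_typ Y D); auto.
Qed.

Lemma stepB Y1 Y2 c1 c2 D1 D2 : (forall x, Y1 x -> B x) -> card Y1 k -> (forall x, Y2 x -> B x) -> card Y2 k ->
  B c1 -> ~ Y1 c1 -> Y2 c1 -> B c2 -> ~ Y2 c2 -> Y1 c2 -> setU1 Y1 c1 = setU1 Y2 c2 ->
  good sub1 k Y1 D1 -> good sub2 (k + 2) Y2 D2 -> False.
Proof.
  intros HY1 CY1 HY2 CY2 B1 n1 Y21 B2 n2 Y12 HW [HD1 [CD1 [E1 G1]]] [HD2 [CD2 [E2 G2]]].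
  destruct (Yc_facts Y1 c1) as [HW1 CW1]; auto.
  destruct (fX _ HW1 CW1) as [XW [HXW [CXW EW]]].
  assert (D1XW : sub1 D1 XW) by (apply (G1 XW); auto; exists c1; auto).
  assert (XWD2 : sub2 D2 XW) by (apply (G2 XW); auto; exists c2; repeat split; auto; rewrite <- HW; auto).
  replace (k + 2) with (S (k + 1)) in CD2 by lia.
  destruct (add_one XW D2 (k + 1) XWD2 CXW CD2) as [b' [D2b [nXb _]]].
  set (V := setU1 D1 b').
  assert (HV : forall x, V x -> B' x) by (intros x [?| ->]; auto).
  assert (CV : card V (k + 1)) by (rewrite Nat.add_1_r; apply card_add; auto).
  destruct (proj1 (G1 V HV CV)) as [c [Bc [nc Ec]]]. { intros x Hx; left; auto. }
  destruct (proj1 (G2 V HV CV)) as [d [Bd [nd Ed]]]. { intros x [Hx| ->]; auto. }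
  destruct (Yc_facts Y1 c) as [HU1 CU1]; auto.
  destruct (Yc_facts Y2 d) as [HU2 CU2]; auto.
  assert (EU : setU1 Y1 c = setU1 Y2 d) by (apply finj; auto; rewrite Ec, Ed; auto).
  assert (WU : forall x, setU1 Y1 c1 x -> setU1 Y1 c x).
  { intros x [Hx| ->]; [left; auto|]. rewrite EU; left; auto. }
  assert (EUW : setU1 Y1 c = setU1 Y1 c1).
  { apply sext; intro x; split; [|apply WU]. apply (card_sub_eq _ _ (k + 1) (k + 1) WU); auto. }
  rewrite EUW, EW in Ec. apply nXb. assert (XW = V) by (apply sinj'; auto). rewrite H. right; auto.
Qed.

Lemma Y3_facts Y1 a b : (forall x, Y1 x -> B x) -> card Y1 k -> Y1 a -> B b -> ~ Y1 b ->
  (forall x, setU1 (setD1 Y1 a) b x -> B x) /\ card (setU1 (setD1 Y1 a) b) k.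
Proof.
  intros HY CY Ya Bb nYb. split.
  - intros x [[? ?]| ->]; auto.
  - destruct (card_del _ _ _ CY Ya) as [C1 _]. replace k with (S (k - 1)) by lia.
    apply card_add; auto. intros [? ?]; auto.
Qed.

Lemma adj Y1 a b : (forall x, Y1 x -> B x) -> card Y1 k -> Y1 a -> B b -> ~ Y1 b ->
  (typ Y1 <-> typ (setU1 (setD1 Y1 a) b)).
Proof.
  intros HY CY Ya Bb nYb. destruct (Y3_facts Y1 a b) as [HY3 CY3]; auto.
  set (Y3 := setU1 (setD1 Y1 a) b) in *.
  assert (Hab : a <> b) by (intros ->; auto).
  assert (E : setU1 Y1 b = setU1 Y3 a).
  { apply sext; intro x; unfold Y3, setU1, setD1. destruct (classic (x = a)); split; intros; try tauto.
    subst; tauto. }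
  assert (nY3a : ~ Y3 a) by (intros [[? ?]|?]; auto).
  assert (Y3b : Y3 b) by (right; auto).
  assert (HBa : B a) by auto.
  destruct (classic (typ Y1)) as [T1|T1]; destruct (classic (typ Y3)) as [T3|T3]; try tauto; exfalso.
  - destruct (typ_good Y1 HY CY T1) as [D1 G1]. destruct (ntyp_good Y3 HY3 CY3 T3) as [_ [D3 G3]].
    apply (stepB Y1 Y3 b a D1 D3); auto.
  - destruct (typ_good Y3 HY3 CY3 T3) as [D3 G3]. destruct (ntyp_good Y1 HY CY T1) as [_ [D1 G1]].
    apply (stepB Y3 Y1 a b D3 D1); auto.
Qed.

Lemma conn m : forall Y1 Y2, (forall x, Y1 x -> B x) -> card Y1 k -> (forall x, Y2 x -> B x) -> card Y2 k ->
  card (fun x => Y1 x /\ ~ Y2 x) m -> (typ Y1 <-> typ Y2).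
Proof.
  induction m as [|m IH]; intros Y1 Y2 HY1 CY1 HY2 CY2 Cm.
  - assert (S12 : forall x, Y1 x -> Y2 x).
    { intros x Hx. apply NNPP; intro. apply (card0 _ x Cm); auto. }
    assert (Y1 = Y2).
    { apply sext; intro x; split; auto. apply (card_sub_eq _ _ k k S12); auto. }
    subst; tauto.
  - destruct (card_elem _ _ Cm) as [a [Ya nY2a]].
    assert (Hb : exists b, Y2 b /\ ~ Y1 b).
    { apply NNPP; intro Hn. apply nY2a.
      assert (S21 : forall x, Y2 x -> Y1 x) by (intros x Hx; apply NNPP; intro; apply Hn; eauto).
      apply (card_sub_eq _ _ k k S21); auto. }
    destruct Hb as [b [Y2b nY1b]].
    rewrite (adj Y1 a b); auto.
    destruct (Y3_facts Y1 a b) as [HY3 CY3]; auto.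
    apply IH; auto.
    destruct (card_del _ _ _ Cm (conj Ya nY2a)) as [C' _]. replace (S m - 1) with m in C' by lia.
    apply (card_ext _ _ _ C'). intro x; unfold setD1, setU1. split.
    + intros [[Hx Hn] Hne]; split; auto.
    + intros [[[Hx Hne]| ->] Hn]; [split; auto|contradiction].
Qed.

Lemma typ_const Y1 Y2 : (forall x, Y1 x -> B x) -> card Y1 k -> (forall x, Y2 x -> B x) -> card Y2 k ->
  (typ Y1 <-> typ Y2).
Proof.
  intros HY1 CY1 HY2 CY2. destruct (card_sub_ex (fun x => Y1 x /\ ~ Y2 x) Y1 k) as [m [_ Cm]]; auto.
  - tauto.
  - apply (conn m); auto.
Qed.

Lemma good_inj rel s W w1 w2 D : (forall x, W x -> B x) -> card W (k + 1) -> W w1 -> W w2 ->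
  good rel s (setD1 W w1) D -> good rel s (setD1 W w2) D -> w1 = w2.
Proof.
  intros HW CW W1 W2 [_ [_ [_ G1]]] [_ [_ [_ G2]]]. apply NNPP; intro ne.
  pose proof (card_diff B (n + 1) (k + 1) CB W HW CW) as CD.
  replace (n + 1 - (k + 1)) with (S (n - k - 1)) in CD by lia.
  destruct (card_elem _ _ CD) as [c [Bc nWc]].
  assert (HY1 : forall x, setD1 W w1 x -> B x) by (intros x [? ?]; auto).
  assert (HY2 : forall x, setD1 W w2 x -> B x) by (intros x [? ?]; auto).
  destruct (card_del _ _ _ CW W1) as [CY1 _]. replace (k + 1 - 1) with k in CY1 by lia.
  destruct (card_del _ _ _ CW W2) as [CY2 _]. replace (k + 1 - 1) with k in CY2 by lia.
  assert (nY1c : ~ setD1 W w1 c) by (intros [? ?]; auto).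
  destruct (Yc_facts _ c HY1 CY1 Bc nY1c) as [HU1 CU1].
  destruct (fX _ HU1 CU1) as [X [HX [CX EX]]].
  assert (R1 : rel D X) by (apply (G1 X); auto; exists c; auto).
  destruct (proj1 (G2 X HX CX) R1) as [d [Bd [nd Ed]]].
  destruct (Yc_facts _ d HY2 CY2 Bd nd) as [HU2 CU2].
  assert (EU : setU1 (setD1 W w1) c = setU1 (setD1 W w2) d) by (apply finj; auto; rewrite EX, Ed; auto).
  assert (Hw2 : setU1 (setD1 W w2) d w2) by (rewrite <- EU; left; split; auto).
  destruct Hw2 as [[_ ?]|Hdw]; [congruence|subst d].
  assert (Hc : setU1 (setD1 W w2) w2 c) by (rewrite <- EU; right; auto).
  destruct Hc as [[? _]| ->]; auto.
Qed.

Lemma setU1D1 {T} (X : T -> Prop) w : X w -> setU1 (setD1 X w) w = X.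
Proof.
  intros Xw. apply sext; intro x; unfold setU1, setD1. split; [intros [[? ?]| ->]; auto|].
  intro Hx. destruct (classic (x = w)); auto.
Qed.

Lemma setD1U1 {T} (X : T -> Prop) w : ~ X w -> setD1 (setU1 X w) w = X.
Proof.
  intros nXw. apply sext; intro x; unfold setU1, setD1. split; [intros [[?| ->] ?]; auto; congruence|].
  intro Hx. split; auto. intros ->; auto.
Qed.

Lemma surj1 (Hall : forall Y, (forall x, Y x -> B x) -> card Y k -> typ Y) V' :
  (forall x, V' x -> B' x) -> card V' k -> exists Y, (forall x, Y x -> B x) /\ card Y k /\ g (span L Y) = span L' V'.
Proof.
  intros HV CV.
  pose proof (card_diff B' (n + 1) k CB' V' HV CV) as CD.
  replace (n + 1 - k) with (S (n - k)) in CD by lia.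
  destruct (card_elem _ _ CD) as [e [Be nVe]].
  set (X' := setU1 V' e).
  assert (HX' : forall x, X' x -> B' x) by (intros x [?| ->]; auto).
  assert (CX' : card X' (k + 1)) by (rewrite Nat.add_1_r; apply card_add; auto).
  destruct (fsurj X' HX' CX') as [W [HW [CW EW]]].
  assert (HYw : forall w, W w -> (forall x, setD1 W w x -> B x) /\ card (setD1 W w) k).
  { intros w Ww. split; [intros x [? ?]; auto|]. destruct (card_del _ _ _ CW Ww) as [C _].
    replace (k + 1 - 1) with k in C by lia; auto. }
  destruct (rel_card W X' (fun w z => g (span L (setD1 W w)) = span L' (setD1 X' z)) (k + 1) (k + 1) CW CX')
    as [_ Hs].
  - intros w Ww. destruct (HYw w Ww) as [HY CY].
    destruct (typ_good _ HY CY (Hall _ HY CY)) as [D [HD [CD1 [ED G]]]].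
    assert (DX : sub1 D X').
    { apply (G X' HX' CX'). exists w; repeat split; auto. intros [? ?]; auto.
      rewrite setU1D1; auto. }
    rewrite Nat.add_1_r in CX'.
    destruct (add_one D X' k DX CD1 CX') as [z [Xz [nDz Hiff]]].
    exists z; split; auto. rewrite ED. f_equal. apply sext; intro x; unfold setD1; rewrite Hiff.
    split; [intro Hx; split; auto; intros ->; contradiction|tauto].
  - intros w1 w2 z W1 W2 E1 E2.
    destruct (HYw w1 W1) as [HY1 CY1]. destruct (HYw w2 W2) as [HY2 CY2].
    destruct (typ_good _ HY1 CY1 (Hall _ HY1 CY1)) as [D1 G1].
    destruct (typ_good _ HY2 CY2 (Hall _ HY2 CY2)) as [D2 G2].
    assert (D1 = D2).
    { destruct G1 as [? [_ [F1 _]]]; destruct G2 as [? [_ [F2 _]]]. apply sinj'; auto. congruence. }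
    subst D2. apply (good_inj sub1 k W w1 w2 D1); auto.
  - destruct (Hs eq_refl e (or_intror eq_refl)) as [w [Ww Ew]].
    destruct (HYw w Ww) as [HY CY]. exists (setD1 W w); repeat split; auto.
    rewrite Ew. unfold X'. rewrite setD1U1; auto.
Qed.

Lemma surj2 (Hall : forall Y, (forall x, Y x -> B x) -> card Y k -> ~ typ Y) (Hn : n = 2 * k + 1) V' :
  (forall x, V' x -> B' x) -> card V' (k + 2) -> exists Y, (forall x, Y x -> B x) /\ card Y k /\ g (span L Y) = span L' V'.
Proof.
  intros HV CV.
  replace (k + 2) with (S (k + 1)) in CV by lia.
  destruct (card_elem _ _ CV) as [z0 Vz0].
  set (X' := setD1 V' z0).
  assert (HX' : forall x, X' x -> B' x) by (intros x [? ?]; auto).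
  assert (CX' : card X' (k + 1)).
  { destruct (card_del _ _ _ CV Vz0) as [C _]. replace (S (k + 1) - 1) with (k + 1) in C by lia; auto. }
  destruct (fsurj X' HX' CX') as [W [HW [CW EW]]].
  assert (HYw : forall w, W w -> (forall x, setD1 W w x -> B x) /\ card (setD1 W w) k).
  { intros w Ww. split; [intros x [? ?]; auto|]. destruct (card_del _ _ _ CW Ww) as [C _].
    replace (k + 1 - 1) with k in C by lia; auto. }
  pose proof (card_diff B' (n + 1) (k + 1) CB' X' HX' CX') as CD.
  replace (n + 1 - (k + 1)) with (k + 1) in CD by lia.
  destruct (rel_card W _ (fun w z => g (span L (setD1 W w)) = span L' (setU1 X' z)) (k + 1) (k + 1) CW CD)
    as [_ Hs].
  - intros w Ww. destruct (HYw w Ww) as [HY CY].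
    destruct (ntyp_good _ HY CY (Hall _ HY CY)) as [_ [D [HD [CD1 [ED G]]]]].
    assert (XD : sub2 D X').
    { apply (G X' HX' CX'). exists w; repeat split; auto. intros [? ?]; auto.
      rewrite setU1D1; auto. }
    replace (k + 2) with (S (k + 1)) in CD1 by lia.
    destruct (add_one X' D (k + 1) XD CX' CD1) as [z [Dz [nXz Hiff]]].
    exists z; split; [split; auto|]. rewrite ED. f_equal. apply sext; intro x; unfold setU1; rewrite Hiff; tauto.
  - intros w1 w2 z W1 W2 E1 E2.
    destruct (HYw w1 W1) as [HY1 CY1]. destruct (HYw w2 W2) as [HY2 CY2].
    destruct (ntyp_good _ HY1 CY1 (Hall _ HY1 CY1)) as [_ [D1 G1]].
    destruct (ntyp_good _ HY2 CY2 (Hall _ HY2 CY2)) as [_ [D2 G2]].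
    assert (D1 = D2).
    { destruct G1 as [? [_ [F1 _]]]; destruct G2 as [? [_ [F2 _]]]. apply sinj'; auto. congruence. }
    subst D2. apply (good_inj sub2 (k + 2) W w1 w2 D1); auto.
  - assert (nX : ~ X' z0) by (intros [? ?]; auto).
    destruct (Hs eq_refl z0 (conj (HV z0 Vz0) nX)) as [w [Ww Ew]].
    destruct (HYw w Ww) as [HY CY]. exists (setD1 W w); repeat split; auto.
    rewrite Ew. unfold X'. rewrite setU1D1; auto.
Qed.

Lemma concl1 (Hall : forall Y, (forall x, Y x -> B x) -> card Y k -> typ Y) :
  forall T, (exists Sx, base_subset L B (k - 1) Sx /\ g Sx = T) <-> base_subset L' B' (k - 1) T.
Proof.
  intros T. rewrite (bs_iff L' HE' n Hd' B' (k - 1) T HB'). replace (k - 1 + 1) with k by lia. split.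
  - intros [Sx [HS <-]]. apply (bs_iff L HE n Hd) in HS; auto. destruct HS as [Y [HY [CY ->]]].
    replace (k - 1 + 1) with k in CY by lia.
    destruct (typ_good Y HY CY (Hall _ HY CY)) as [D [HD [CD [ED _]]]]. exists D; auto.
  - intros [V [HV [CV ->]]]. destruct (surj1 Hall V HV CV) as [Y [HY [CY EY]]].
    exists (span L Y); split; auto. apply (bs_iff L HE n Hd); auto. exists Y; repeat split; auto.
    replace (k - 1 + 1) with k by lia; auto.
Qed.

Lemma concl2 (Hall : forall Y, (forall x, Y x -> B x) -> card Y k -> ~ typ Y) (Hn : n = 2 * k + 1) :
  forall T, (exists Sx, base_subset L B (k - 1) Sx /\ g Sx = T) <-> base_subset L' B' (k + 1) T.
Proof.
  intros T. rewrite (bs_iff L' HE' n Hd' B' (k + 1) T HB'). replace (k + 1 + 1) with (k + 2) by lia. split.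
  - intros [Sx [HS <-]]. apply (bs_iff L HE n Hd) in HS; auto. destruct HS as [Y [HY [CY ->]]].
    replace (k - 1 + 1) with k in CY by lia.
    destruct (ntyp_good Y HY CY (Hall _ HY CY)) as [_ [D [HD [CD [ED _]]]]]. exists D; auto.
  - intros [V [HV [CV ->]]]. destruct (surj2 Hall Hn V HV CV) as [Y [HY [CY EY]]].
    exists (span L Y); split; auto. apply (bs_iff L HE n Hd); auto. exists Y; repeat split; auto.
    replace (k - 1 + 1) with k by lia; auto.
Qed.

End Base.

Definition typS Sx := dim L' (g Sx) (k - 1).

Lemma within B : base L B -> forall Y1 Y2, (forall x, Y1 x -> B x) -> card Y1 k -> (forall x, Y2 x -> B x) -> card Y2 k ->
  (typS (span L Y1) <-> typS (span L Y2)).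
Proof.
  intros HB Y1 Y2 H1 C1 H2 C2. destruct (Hfb B HB) as [B' [HB' HBB]].
  apply (typ_const B B' HB HB' HBB); auto.
Qed.

Lemma global S1 S2 : dim L S1 (k - 1) -> dim L S2 (k - 1) -> (typS S1 <-> typS S2).
Proof.
  intros D1 D2. apply (dim_iff L HE) in D1, D2.
  destruct D1 as [I1 [i1 [C1 <-]]]. destruct D2 as [I2 [i2 [C2 <-]]].
  replace (k - 1 + 1) with k in C1, C2 by lia.
  destruct (base_exists L HE n Hd) as [B0 HB0].
  destruct (extend L HE n Hd I1 B0 i1 HB0) as [W1 [_ [_ HB1]]].
  set (B1 := fun x => I1 x \/ W1 x) in *.
  destruct (extend L HE n Hd I2 B1 i2 HB1) as [W2 [HW2 [Hdis HB2]]].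
  set (B2 := fun x => I2 x \/ W2 x) in *.
  pose proof (base_card L HE n Hd B2 HB2) as CB2.
  pose proof (card_diff B2 (n + 1) k CB2 I2 (fun x h => or_introl h) C2) as CW.
  assert (CW2 : card W2 (n + 1 - k)).
  { apply (card_ext _ _ _ CW). intro x; unfold B2; split; [intros [[?|?] ?]; tauto|].
    intro Hx; split; auto. intro; eauto. }
  destruct (card_subset W2 k (n + 1 - k) CW2) as [Y0 [HY0 CY0]]; [lia|].
  rewrite (within B1 HB1 I1 Y0); auto.
  - apply (within B2 HB2 Y0 I2); auto.
    + intros x Hx; right; auto.
    + intros x Hx; left; auto.
  - intros x Hx; left; auto.
Qed.

End Main.

Theorem lemma2p8 (P P' : Type) (L : (P -> Prop) -> Prop) (L' : (P' -> Prop) -> Prop)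
  (n k : nat) (f g : (P -> Prop) -> (P' -> Prop)) :
  linear_space L -> linear_space L' ->
  exchange_axiom L -> exchange_axiom L' ->
  axiom_P2 L -> axiom_P2 L' ->
  dim L full n -> dim L' full n ->
  1 <= k -> 2 * k + 1 <= n ->
  (forall S, dim L S k -> dim L' (f S) k) ->
  (forall S T, dim L S k -> dim L T k -> f S = f T -> S = T) ->
  maps_base_subsets L L' k k f ->
  (forall S, dim L S (k - 1) -> fk1_prop L L' k f S (g S)) ->
  (forall S S', dim L S (k - 1) -> fk1_prop L L' k f S S' -> seteq S' (g S)) ->
  ((forall S, dim L S (k - 1) -> dim L' (g S) (k - 1)) /\
     maps_base_subsets L L' (k - 1) (k - 1) g)
  \/
  ((forall S, dim L S (k - 1) -> dim L' (g S) (k + 1)) /\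
     maps_base_subsets L L' (k - 1) (k + 1) g).
Proof.
  intros _ _ HE HE' _ _ Hd Hd' Hk Hnk Hf Hinj Hfb Hg _.
  destruct (base_exists L HE n Hd) as [B0 HB0].
  pose proof (base_card L HE n Hd B0 HB0) as CB0.
  destruct (card_subset B0 k (n + 1) CB0) as [Y0 [HY0 CY0]]; [lia|].
  assert (HS0 : dim L (span L Y0) (k - 1)).
  { apply (dim_span L HE). apply (indep_sub L B0); auto. apply base_iff in HB0; tauto.
    replace (k - 1 + 1) with k by lia; auto. }
  assert (Hsp : forall B Y, base L B -> (forall x, Y x -> B x) -> card Y k -> dim L (span L Y) (k - 1)).
  { intros B Y HB HY CY. apply (dim_span L HE). apply (indep_sub L B); auto. apply base_iff in HB; tauto.
    replace (k - 1 + 1) with k by lia; auto. }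
  destruct (classic (typS L' k g (span L Y0))) as [T0|T0].
  - left. split.
    + intros Sx HS. apply (global L L' n k f g HE HE' Hd Hd' Hk Hnk Hinj Hfb Hg (span L Y0)); auto.
    + intros B HB. destruct (Hfb B HB) as [B' [HB' HBB]]. exists B'; split; auto.
      apply (concl1 L L' n k f g HE HE' Hd Hd' Hk Hnk Hinj Hg B B' HB HB' HBB).
      intros Y HY CY. apply (global L L' n k f g HE HE' Hd Hd' Hk Hnk Hinj Hfb Hg (span L Y0)); eauto.
  - assert (Hall : forall Sx, dim L Sx (k - 1) -> ~ typS L' k g Sx).
    { intros Sx HS Ht. apply T0.
      apply (global L L' n k f g HE HE' Hd Hd' Hk Hnk Hinj Hfb Hg Sx); auto. }
    right. split.
    + intros Sx HS. destruct (Hg Sx HS) as [[?|?] _]; auto. exfalso; apply (Hall Sx); auto.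
    + intros B HB. destruct (Hfb B HB) as [B' [HB' HBB]]. exists B'; split; auto.
      pose proof (base_card L HE n Hd B HB) as CB.
      destruct (card_subset B k (n + 1) CB) as [Y1 [HY1 CY1]]; [lia|].
      destruct (ntyp_good L L' n k f g HE HE' Hd Hd' Hk Hnk Hinj Hg B B' HB HB' HBB Y1 HY1 CY1) as [Hn _].
      { apply (Hall _ (Hsp B Y1 HB HY1 CY1)). }
      apply (concl2 L L' n k f g HE HE' Hd Hd' Hk Hnk Hinj Hg B B' HB HB' HBB); auto.
      intros Y HY CY. apply (Hall _ (Hsp B Y HB HY CY)).
Qed.
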